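(* Every solution $(x(t),y(t))$ of the system (FHN-CNN) with initial state $(x^0,y^0)\in H$ satisfies, for all $t\ge 0$, $$\sum_{i=1}^n\big(|x_i(t)|^2+|y_i(t)|^2\big)\le\frac{1}{\min\{C_1,1\}}\Big[e^{-\delta t}\sum_{i=1}^n\big(C_1|x_i^0|^2+|y_i^0|^2\big)+\frac{n}{\delta}\Big(C_2+\frac{\delta\beta}{b}\Big)\Big],$$ where $C_1=\frac{\delta}{2b}$ and $C_2=\frac{b}{4\delta\lambda}\Big(\frac{\delta^2}{2b}+\frac{\delta}{2}+\frac{2c^2}{\delta}\Big)^2$.
   Context: Fix an integer $n\ge 4$ and positive constants $a,b,c,\delta,p$. Let $f\in C^1(\mathbb{R},\mathbb{R})$ satisfy, for some positive constants $\lambda,\beta,\gamma$: $f(s)s\le -\lambda s^4+\beta$ and $f'(s)\le\gamma$ for all $s\in\mathbb{R}$. The FitzHugh–Nagumo cellular neural network with boundary feedback (FHN-CNN) is the ODE system for $t>0$, $1\le i\le n$: $$\frac{dx_i}{dt}=a(x_{i-1}-2x_i+x_{i+1})+f(x_i)-by_i+pu_i,\qquad \frac{dy_i}{dt}=cx_i-\delta y_i,$$ with the periodic convention $x_0=x_n$, $x_{n+1}=x_1$, and the boundary feedback $u_1=u_{n+1}=x_n-x_1$, $u_i=0$ for $2\le i\le n-1$, $u_n=u_0=x_1-x_n$. The state space is $H=\mathbb{R}^{2n}$ with norm $\|(x,y)\|^2=\sum_{i=1}^n(|x_i|^2+|y_i|^2)$; initial data $x_i(0)=x_i^0$, $y_i(0)=y_i^0$.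 *)

(* Defs.v *)
From Stdlib Require Import Reals Lra Lia.
From Coquelicot Require Import Coquelicot.
Open Scope R_scope.

(* States are indexed by i in {1,...,n}; a trajectory is x : nat -> R -> R,
   x i t = x_i(t). Periodic convention x_0 = x_n, x_{n+1} = x_1. *)
Definition xprev (n : nat) (x : nat -> R) (i : nat) : R :=
  if Nat.eqb i 1 then x n else x (i - 1)%nat.
Definition xnext (n : nat) (x : nat -> R) (i : nat) : R :=
  if Nat.eqb i n then x 1%nat else x (i + 1)%nat.

Definition ufb (n : nat) (x : nat -> R) (i : nat) : R :=
  if Nat.eqb i 1 then x n - x 1%nat
  else if Nat.eqb i n then x 1%nat - x n else 0.

Definition fhn_rhs_x (n : nat) (a b p : R) (f : R -> R)
  (x y : nat -> R) (i : nat) : R :=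
  a * (xprev n x i - 2 * x i + xnext n x i) + f (x i) - b * y i + p * ufb n x i.

Definition is_FHN_solution (n : nat) (a b c delta p : R) (f : R -> R)
  (x0 y0 : nat -> R) (x y : nat -> R -> R) : Prop :=
  (forall i, (1 <= i <= n)%nat ->
     x i 0 = x0 i /\ y i 0 = y0 i /\
     filterlim (x i) (at_right 0) (locally (x i 0)) /\
     filterlim (y i) (at_right 0) (locally (y i 0))) /\
  (forall t, 0 < t -> forall i, (1 <= i <= n)%nat ->
     is_derive (x i) t (fhn_rhs_x n a b p f (fun j => x j t) (fun j => y j t) i) /\
     is_derive (y i) t (c * x i t - delta * y i t)).

(* Main.v *)
Require Import Defs.
From Stdlib Require Import Reals Lra Lia.
From Coquelicot Require Import Coquelicot.
Open Scope R_scope.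

Lemma sumR_plus (u v : nat -> R) m k :
  @eq R (sum_n_m (fun i => u i + v i) m k) (sum_n_m u m k + sum_n_m v m k).
Proof. exact (sum_n_m_plus u v m k). Qed.

Lemma sumR_scal (c : R) (u : nat -> R) m k :
  @eq R (sum_n_m (fun i => c * u i) m k) (c * sum_n_m u m k).
Proof. exact (sum_n_m_mult_l c u m k). Qed.

Lemma sumR_minus (u v : nat -> R) m k :
  @eq R (sum_n_m (fun i => u i - v i) m k) (sum_n_m u m k - sum_n_m v m k).
Proof.
  replace (sum_n_m (fun i => u i - v i) m k) with
    (sum_n_m (fun i => u i + (-1) * v i) m k).
  2:{ apply sum_n_m_ext_loc; intros; simpl; ring. }
  rewrite sumR_plus, sumR_scal. ring.
Qed.

Lemma sumR_Sm (a : nat -> R) n m : (n <= S m)%nat ->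
  @eq R (sum_n_m a n (S m)) (sum_n_m a n m + a (S m)).
Proof. intros; now rewrite sum_n_Sm. Qed.

Lemma sumR_Sn (a : nat -> R) n m : (n <= m)%nat ->
  @eq R (sum_n_m a n m) (a n + sum_n_m a (S n) m).
Proof. intros; now rewrite sum_Sn_m. Qed.

Lemma sum_deriv (g : nat -> R -> R) (dg : nat -> R) t n :
  (forall i, (1 <= i <= n)%nat -> is_derive (g i) t (dg i)) ->
  is_derive (fun s => sum_n_m (fun i => g i s) 1 n) t (sum_n_m dg 1 n).
Proof.
  induction n as [|n IH]; intros H.
  - rewrite sum_n_m_zero by lia.
    apply (is_derive_ext (fun _ => 0)).
    + intros s; rewrite sum_n_m_zero by lia; reflexivity.
    + apply (@is_derive_const R_AbsRing R_NormedModule).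
  - rewrite sumR_Sm by lia.
    apply (is_derive_ext (fun s => sum_n_m (fun i => g i s) 1 n + g (S n) s)).
    + intros s; rewrite sumR_Sm by lia; reflexivity.
    + apply (is_derive_plus (fun s => sum_n_m (fun i => g i s) 1 n) (g (S n))).
      * apply IH; intros; apply H; lia.
      * apply H; lia.
Qed.

Section Lims.
Context {T : Type} {F : (T -> Prop) -> Prop} {FF : Filter F}.

Lemma lim_plus (u v : T -> R) a b :
  filterlim u F (locally a) -> filterlim v F (locally b) ->
  filterlim (fun s => u s + v s) F (locally (a + b)).
Proof. intros Hu Hv. apply (filterlim_comp_2 u v Rplus Hu Hv). exact (filterlim_plus a b). Qed.

Lemma lim_mult (u v : T -> R) a b :
  filterlim u F (locally a) -> filterlim v F (locally b) ->
  filterlim (fun s => u s * v s) F (locally (a * b)).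
Proof. intros Hu Hv. apply (filterlim_comp_2 u v Rmult Hu Hv). exact (filterlim_mult a b). Qed.

Lemma lim_const (a : R) : filterlim (fun _ : T => a) F (locally a).
Proof. apply filterlim_const. Qed.

Lemma sum_lim (g : nat -> T -> R) (l : nat -> R) n :
  (forall i, (1 <= i <= n)%nat -> filterlim (g i) F (locally (l i))) ->
  filterlim (fun s => sum_n_m (fun i => g i s) 1 n) F (locally (sum_n_m l 1 n)).
Proof.
  induction n as [|n IH]; intros H.
  - rewrite sum_n_m_zero by lia.
    apply (filterlim_ext (fun _ => zero)).
    + intros s; rewrite sum_n_m_zero by lia; reflexivity.
    + apply filterlim_const.
  - rewrite sumR_Sm by lia.
    apply (filterlim_ext (fun s => sum_n_m (fun i => g i s) 1 n + g (S n) s)).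
    + intros s; rewrite sumR_Sm by lia; reflexivity.
    + apply lim_plus. apply IH; intros; apply H; lia. apply H; lia.
Qed.
End Lims.
Lemma pt_bound (b c d l be x y fx : R) :
  0 < b -> 0 < c -> 0 < d -> 0 < l ->
  fx * x <= - l * x ^ 4 + be ->
  (d/(2*b))*(2*x*fx) + (d/(2*b))*(2*x*(-b*y)) + 2*y*(c*x - d*y)
    + d*((d/(2*b))*(x*x) + y*y)
  <= b / (4 * d * l) * (d ^ 2 / (2 * b) + d / 2 + 2 * c ^ 2 / d) ^ 2 + d * be / b.
Proof.
  intros Hb Hc Hd Hl Hf.
  set (K := d ^ 2 / (2 * b) + d / 2 + 2 * c ^ 2 / d).
  set (A := d * l / b).
  assert (HA : 0 < A) by (unfold A; apply Rdiv_lt_0_compat; nra).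
  assert (h1 : (d/(2*b))*(2*x*fx) <= (d/b)*(-l*x^4+be)).
  { replace ((d/(2*b))*(2*x*fx)) with ((d/b)*(fx*x)) by (field; lra).
    apply Rmult_le_compat_l; [|lra]. apply Rlt_le, Rdiv_lt_0_compat; lra. }
  assert (h2 : (2*c - d)*x*y - d*y^2 <= (d/2 + 2*c^2/d)*x^2).
  { assert (E: d*((d/2 + 2*c^2/d)*x^2 - ((2*c - d)*x*y - d*y^2)) =
       (d*y - (2*c-d)*x/2)^2 + (d+2*c)^2*x^2/4) by (field; lra).
    assert (0 <= (d*y - (2*c-d)*x/2)^2) by apply pow2_ge_0.
    assert (0 <= (d+2*c)^2*x^2/4).
    { assert (0 <= (d+2*c)^2) by apply pow2_ge_0. assert (0 <= x^2) by apply pow2_ge_0.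
      apply Rmult_le_pos; [|lra]. nra. }
    nra. }
  assert (h3 : K*x^2 - A*x^4 <= K^2/(4*A)).
  { assert (E: 4*A*(K^2/(4*A) - (K*x^2 - A*x^4)) = (K - 2*A*x^2)^2) by (field; lra).
    assert (0 <= (K - 2*A*x^2)^2) by apply pow2_ge_0. nra. }
  assert (E1 : K^2/(4*A) = b / (4 * d * l) * K ^ 2) by (unfold A; field; lra).
  assert (E2 : (d/(2*b))*(2*x*(-b*y)) = -d*x*y) by (field; lra).
  assert (E3 : (d/b)*(-l*x^4+be) = -A*x^4 + d*be/b) by (unfold A; field; lra).
  assert (E4 : K = d^2/(2*b) + (d/2 + 2*c^2/d)) by (unfold K; ring).
  rewrite E2. rewrite E1 in h3. rewrite E3 in h1. rewrite E4 in h3.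
  assert (E5 : d*((d/(2*b))*(x*x)) = d^2/(2*b)*x^2) by (field; lra).
  nra.
Qed.

Lemma cyc_next (h : R -> R) (X : nat -> R) n : (2 <= n)%nat ->
  @eq R (sum_n_m (fun i => h (xnext n X i)) 1 n) (sum_n_m (fun i => h (X i)) 1 n).
Proof.
  intros Hn. destruct n as [|m]; [lia|].
  rewrite sumR_Sm by lia.
  unfold xnext at 2. rewrite Nat.eqb_refl.
  rewrite (sum_n_m_ext_loc _ (fun i => h (X (S i)))).
  2:{ intros k Hk. unfold xnext. destruct (Nat.eqb_spec k (S m)); [lia|].
      now rewrite Nat.add_1_r. }
  rewrite (sum_n_m_S (fun i => h (X i))).
  rewrite (sumR_Sn (fun i => h (X i)) 1 (S m)) by lia. simpl. ring.
Qed.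

Lemma cyc_prev (h : R -> R) (X : nat -> R) n : (2 <= n)%nat ->
  @eq R (sum_n_m (fun i => h (xprev n X i)) 1 n) (sum_n_m (fun i => h (X i)) 1 n).
Proof.
  intros Hn. destruct n as [|m]; [lia|].
  rewrite sumR_Sn by lia.
  unfold xprev at 1. simpl Nat.eqb.
  rewrite <- (sum_n_m_S (fun i => h (xprev (S m) X i))).
  rewrite (sum_n_m_ext_loc _ (fun i => h (X i)) 1 m).
  2:{ intros k Hk. unfold xprev. destruct (Nat.eqb_spec (S k) 1); [lia|].
      f_equal; f_equal; lia. }
  rewrite (sumR_Sm (fun i => h (X i)) 1 m) by lia. ring.
Qed.

Lemma ufb_sum (X : nat -> R) n : (4 <= n)%nat ->
  sum_n_m (fun i => X i * ufb n X i) 1 n <= 0.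
Proof.
  intros Hn. destruct n as [|m]; [lia|].
  rewrite sumR_Sn by lia. rewrite sumR_Sm by lia.
  rewrite (sum_n_m_ext_loc _ (fun _ => 0)).
  2:{ intros k Hk. unfold ufb. destruct (Nat.eqb_spec k 1); [lia|].
      destruct (Nat.eqb_spec k (S m)); [lia|]. apply Rmult_0_r. }
  rewrite sum_n_m_const. unfold ufb. simpl Nat.eqb. rewrite Nat.eqb_refl.
  destruct (Nat.eqb_spec (S m) 1); [lia|].
  destruct (Nat.eqb_spec m 0); [lia|]. rewrite Rmult_0_r.
  assert (0 <= (X (S m) - X 1%nat)^2) by (apply pow2_ge_0). nra.
Qed.

Lemma lap_sum (X : nat -> R) n : (2 <= n)%nat ->
  sum_n_m (fun i => X i * (xprev n X i - 2 * X i + xnext n X i)) 1 n <= 0.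
Proof.
  intros Hn.
  apply Rle_trans with (sum_n_m (fun i => (/2) * ((xprev n X i)^2 - (X i)^2) + (/2) * ((xnext n X i)^2 - (X i)^2)) 1 n).
  { apply sum_n_m_le. intros k.
    assert (0 <= (X k - xprev n X k)^2) by apply pow2_ge_0.
    assert (0 <= (X k - xnext n X k)^2) by apply pow2_ge_0. nra. }
  rewrite sumR_plus, !sumR_scal, !sumR_minus.
  rewrite (cyc_prev (fun v => v^2)), (cyc_next (fun v => v^2)) by lia. lra.
Qed.
Lemma is_derive_eqv (f : R -> R) x l l' : is_derive f x l -> l = l' -> is_derive f x l'.
Proof. intros H E; subst; exact H. Qed.

Lemma der_g (u v : R -> R) (C s du dv : R) :
  is_derive u s du -> is_derive v s dv ->
  is_derive (fun s => C*(u s*u s) + v s*v s) s (C*(2*u s*du) + 2*v s*dv).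
Proof.
  intros Hu Hv.
  assert (Hu2 := is_derive_mult u u s du du Hu Hu Rmult_comm).
  assert (Hv2 := is_derive_mult v v s dv dv Hv Hv Rmult_comm).
  assert (H1 := is_derive_scal _ _ C _ Hu2).
  assert (H := is_derive_plus _ _ _ _ _ H1 Hv2).
  eapply is_derive_eqv. exact H.
  unfold plus, mult; simpl. ring.
Qed.

Lemma energy_bound n (a b c d p l be : R) (f : R -> R) (X Y : nat -> R) :
  (4 <= n)%nat -> 0 < a -> 0 < b -> 0 < c -> 0 < d -> 0 < p -> 0 < l ->
  (forall s, f s * s <= - l * s ^ 4 + be) ->
  sum_n_m (fun i => (d/(2*b))*(2*X i*fhn_rhs_x n a b p f X Y i)
                     + 2*Y i*(c*X i - d*Y i)) 1 n
  + d * sum_n_m (fun i => (d/(2*b))*(X i*X i) + Y i*Y i) 1 n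
  <= INR n * (b / (4 * d * l) * (d ^ 2 / (2 * b) + d / 2 + 2 * c ^ 2 / d) ^ 2 + d * be / b).
Proof.
  intros Hn Ha Hb Hc Hd Hp Hl Hf.
  set (K0 := b / (4 * d * l) * (d ^ 2 / (2 * b) + d / 2 + 2 * c ^ 2 / d) ^ 2 + d * be / b).
  set (C1 := d/(2*b)).
  assert (HC1 : 0 < C1) by (unfold C1; apply Rdiv_lt_0_compat; lra).
  rewrite <- sumR_scal, <- sumR_plus.
  apply Rle_trans with (sum_n_m (fun i =>
     (2*C1*a) * (X i * (xprev n X i - 2 * X i + xnext n X i))
     + ((2*C1*p) * (X i * ufb n X i) + K0)) 1 n).
  { apply sum_n_m_le. intros k.
    assert (HB := pt_bound b c d l be (X k) (Y k) (f (X k)) Hb Hc Hd Hl (Hf (X k))).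
    fold C1 in HB. fold K0 in HB.
    unfold fhn_rhs_x.
    match goal with |- ?L <= ?R => assert (E : L - R =
      (C1 * (2 * X k * f (X k)) + C1 * (2 * X k * (- b * Y k)) +
       2 * Y k * (c * X k - d * Y k) + d * (C1 * (X k * X k) + Y k * Y k)) - K0) by ring end.
    lra. }
  rewrite sumR_plus, sumR_scal, sumR_plus, sumR_scal.
  assert (HL := lap_sum X n ltac:(lia)).
  assert (HU := ufb_sum X n Hn).
  rewrite sum_n_m_const. replace (S n - 1)%nat with n by lia.
  assert (0 < 2*C1*a) by nra. assert (0 < 2*C1*p) by nra.
  nra.
Qed.
Theorem mainTheorem2
  (n : nat) (a b c delta p lambda beta gamma : R) (f : R -> R)
  (Hn : (4 <= n)%nat)
  (Ha : 0 < a) (Hb : 0 < b) (Hc : 0 < c) (Hdelta : 0 < delta) (Hp : 0 < p)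
  (Hlambda : 0 < lambda) (Hbeta : 0 < beta) (Hgamma : 0 < gamma)
  (Hf_diff : forall s, ex_derive f s)
  (Hf_C1 : forall s, continuous (Derive f) s)
  (Hf_diss : forall s, f s * s <= - lambda * s ^ 4 + beta)
  (Hf_lip : forall s, Derive f s <= gamma)
  (x0 y0 : nat -> R) (x y : nat -> R -> R)
  (Hsol : is_FHN_solution n a b c delta p f x0 y0 x y) :
  let C1 := delta / (2 * b) in
  let C2 := b / (4 * delta * lambda) *
            (delta ^ 2 / (2 * b) + delta / 2 + 2 * c ^ 2 / delta) ^ 2 in
  forall t, 0 <= t ->
    sum_n_m (fun i => (Rabs (x i t)) ^ 2 + (Rabs (y i t)) ^ 2) 1 n <=
    / Rmin C1 1 *
      (exp (- delta * t) *
         sum_n_m (fun i => C1 * (Rabs (x0 i)) ^ 2 + (Rabs (y0 i)) ^ 2) 1 n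
       + INR n / delta * (C2 + delta * beta / b)).
Proof.
  intros C1 C2 t Ht.
  destruct Hsol as [Hinit Hder].
  assert (HC1 : 0 < C1) by (unfold C1; apply Rdiv_lt_0_compat; lra).
  assert (HC2 : 0 <= C2).
  { unfold C2. apply Rmult_le_pos. apply Rlt_le, Rdiv_lt_0_compat; [lra|].
    apply Rmult_lt_0_compat; [lra|lra]. apply pow2_ge_0. }
  set (K0 := C2 + delta * beta / b).
  assert (HK0 : 0 <= K0).
  { unfold K0. assert (0 < delta*beta/b) by (apply Rdiv_lt_0_compat; nra). lra. }
  set (M := INR n * K0).
  assert (HM : 0 <= M) by (unfold M; apply Rmult_le_pos; [apply pos_INR|lra]).
  set (S := fun s => sum_n_m (fun i => C1*(x i s*x i s) + y i s*y i s) 1 n).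
  set (D := fun s => sum_n_m (fun i => C1*(2*x i s*fhn_rhs_x n a b p f
          (fun j => x j s) (fun j => y j s) i) + 2*y i s*(c*x i s - delta*y i s)) 1 n).
  assert (HSd : forall s, 0 < s -> is_derive S s (D s)).
  { intros s Hs. unfold S, D.
    apply (sum_deriv (fun i s => C1*(x i s*x i s) + y i s*y i s)).
    intros i Hi. destruct (Hder s Hs i Hi) as [Hx Hy]. now apply der_g. }
  assert (HDb : forall s, D s + delta * S s <= M).
  { intros s. unfold D, S, M, K0, C2, C1.
    apply (energy_bound n a b c delta p lambda beta f (fun j => x j s) (fun j => y j s));
      assumption. }
  set (W := fun s => exp (delta*s) * (S s - M/delta)).
  set (dW := fun s => exp (delta*s) * (D s + delta * S s - M)).
  assert (HWd : forall s, 0 < s -> is_derive W s (dW s)).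
  { intros s Hs.
    assert (He : is_derive (fun s => exp (delta*s)) s (delta * exp (delta*s))).
    { auto_derive; auto. ring. }
    assert (Hm := is_derive_minus _ _ _ _ _ (HSd s Hs)
                   (@is_derive_const R_AbsRing R_NormedModule (M/delta) s)).
    assert (H := is_derive_mult _ _ _ _ _ He Hm Rmult_comm).
    eapply is_derive_eqv. exact H.
    unfold dW, minus, opp, zero; simpl; unfold plus, mult; simpl. field. lra. }
  assert (HWneg : forall s, 0 < s -> dW s <= 0).
  { intros s Hs. unfold dW. specialize (HDb s).
    assert (0 < exp (delta*s)) by apply exp_pos. nra. }
  assert (Hmono : forall s u, 0 < s -> s < u -> W u <= W s).
  { intros s u Hs Hsu.
    destruct (MVT_gen W s u dW) as [cc [Hcc E]].
    - rewrite Rmin_left, Rmax_right by lra. intros z Hz. apply HWd. lra.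
    - rewrite Rmin_left, Rmax_right by lra. intros z Hz.
      apply continuity_pt_filterlim.
      apply (@ex_derive_continuous R_AbsRing R_NormedModule W z).
      eexists. apply HWd. lra.
    - rewrite Rmin_left, Rmax_right in Hcc by lra.
      assert (dW cc <= 0) by (apply HWneg; lra). nra. }
  assert (HWlim : filterlim W (at_right 0) (locally (W 0))).
  { unfold W. apply lim_mult.
    - apply (filterlim_filter_le_1 (F := locally 0)).
      + apply filter_le_within.
      + apply (ex_derive_continuous (fun s => exp (delta * s))). auto_derive. auto.
    - apply (filterlim_ext (fun s => S s + (- (M/delta)))).
      { intros s. ring. }
      apply lim_plus; [|apply lim_const].
      unfold S. apply (sum_lim (fun i s => C1*(x i s*x i s) + y i s*y i s)).
      intros i Hi. destruct (Hinit i Hi) as [_ [_ [Hx Hy]]].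
      apply lim_plus; [apply lim_mult; [apply lim_const|apply lim_mult; assumption]|].
      apply lim_mult; assumption. }
  assert (HWt : W t <= W 0).
  { destruct (Rle_lt_or_eq_dec 0 t Ht) as [Htp|Ht0]; [|subst t; lra].
    destruct (Rle_or_lt (W t) (W 0)) as [Hle|Hlt]; [exact Hle|exfalso].
    assert (Heps : 0 < W t - W 0) by lra.
    destruct (proj1 (filterlim_locally W (W 0)) HWlim (mkposreal _ Heps)) as [r Hr].
    set (s := Rmin (r/2) (t/2)).
    assert (Hs0 : 0 < s) by (unfold s; apply Rmin_pos; destruct r; simpl; lra).
    assert (Hsr : s < r) by (unfold s; destruct r as [r rp]; simpl;
       apply Rle_lt_trans with (r/2); [apply Rmin_l|lra]).
    assert (Hst : s < t) by (unfold s; apply Rle_lt_trans with (t/2); [apply Rmin_r|lra]).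
    assert (Hb1 : ball 0 r s).
    { unfold ball; simpl; unfold AbsRing_ball, abs, minus, plus, opp; simpl.
      rewrite Ropp_0, Rplus_0_r, Rabs_right by lra. exact Hsr. }
    specialize (Hr s Hb1 Hs0).
    unfold ball in Hr; simpl in Hr; unfold AbsRing_ball, abs, minus, plus, opp in Hr; simpl in Hr.
    apply Rabs_lt_between in Hr.
    assert (W t <= W s) by (apply Hmono; lra). lra. }
  assert (HS0 : S 0 = sum_n_m (fun i => C1 * (Rabs (x0 i)) ^ 2 + (Rabs (y0 i)) ^ 2) 1 n).
  { unfold S. apply sum_n_m_ext_loc. intros k Hk.
    destruct (Hinit k Hk) as [E1 [E2 _]]. rewrite E1, E2, !pow2_abs. simpl. rewrite !Rmult_1_r. reflexivity. }
  assert (HSt : S t <= exp (- delta * t) * S 0 + M / delta).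
  { unfold W in HWt. rewrite Rmult_0_r, exp_0, Rmult_1_l in HWt.
    assert (Hex : exp (-delta*t) * exp (delta*t) = 1).
    { rewrite <- exp_plus. replace (-delta*t + delta*t) with 0 by ring. apply exp_0. }
    assert (0 < exp (-delta*t)) by apply exp_pos.
    assert (0 <= M/delta) by (apply Rdiv_le_0_compat; lra).
    apply Rmult_le_compat_l with (r := exp (-delta*t)) in HWt; [|lra].
    rewrite <- Rmult_assoc, Hex, Rmult_1_l in HWt. nra. }
  set (mm := Rmin C1 1).
  assert (Hmm : 0 < mm) by (unfold mm; apply Rmin_pos; lra).
  assert (Hlow : mm * sum_n_m (fun i => (Rabs (x i t)) ^ 2 + (Rabs (y i t)) ^ 2) 1 n <= S t).
  { rewrite <- sumR_scal. unfold S. apply sum_n_m_le. intros k.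
    rewrite !pow2_abs.
    assert (mm <= C1) by apply Rmin_l. assert (mm <= 1) by apply Rmin_r.
    assert (0 <= x k t ^ 2) by apply pow2_ge_0. assert (0 <= y k t ^ 2) by apply pow2_ge_0.
    simpl. nra. }
  rewrite <- HS0.
  set (L := sum_n_m (fun i => (Rabs (x i t)) ^ 2 + (Rabs (y i t)) ^ 2) 1 n) in *.
  replace L with (/ mm * (mm * L)) by (field; lra).
  apply Rmult_le_compat_l. apply Rlt_le, Rinv_0_lt_compat; lra.
  assert (INR n / delta * K0 = M/delta) by (unfold M; field; lra). lra.
Qed.
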